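(* Let $n \ge 3$, let $m \ge 1$ be odd, and let $a,b \in \mathbb{Z}/m$ with $a^2\equiv b^2\equiv 1\bmod m$. Then $Q_{2^n m}\cong C_m\rtimes_{(a,b)} Q_{2^n}$ if and only if $(a,b)\equiv(1,-1)$, $(-1,1)$ or $(-1,-1) \bmod m$ in the case $n=3$, and $(a,b) \equiv (1,-1) \bmod m$ in the case $n\ge 4$.
   Context: $Q_{4k}=\langle x,y\mid x^k=y^2, yxy^{-1}=x^{-1}\rangle$. $C_m\rtimes_{(a,b)}Q_{2^n}$ is the semidirect product in which the generators $x,y$ of $Q_{2^n} = \langle x,y\mid x^{2^{n-2}}=y^2, yxy^{-1}=x^{-1}\rangle$ act on a generator $u$ of $C_m$ by $u\mapsto u^a$ and $u\mapsto u^b$ respectively. *)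

(* Defs.v *)
From mathcomp Require Import all_boot all_fingroup.
Set Implicit Arguments.
Unset Strict Implicit.
Unset Printing Implicit Defensive.

(* Main.v *)
Require Import Defs.
From HB Require Import structures.
From mathcomp Require Import all_boot all_fingroup all_algebra cyclic.
From mathcomp Require Import ring zify.
Set Implicit Arguments.
Unset Strict Implicit.
Unset Printing Implicit Defensive.

Record dic (k : nat) := Dic { dval : ('Z_(k.*2) * bool)%type }.
HB.instance Definition _ k := [isNew for @dval k].
HB.instance Definition _ k := [Finite of dic k by <:].

Section Dic.
Variable k : nat.
Local Notation Z := ('Z_(k.*2)).
Import GRing.Theory.
Local Open Scope ring_scope.

Definition sgnZ (e : bool) (j : Z) : Z := if e then - j else j.
Definition kZ : Z := k%:R.

Definition dmul (x y : dic k) : dic k :=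
  let: Dic (i, e) := x in let: Dic (j, f) := y in
  Dic (i + sgnZ e j + (if e && f then kZ else 0), addb e f).
Definition done : dic k := Dic (0, false).
Definition dinv (x : dic k) : dic k :=
  let: Dic (i, e) := x in if e then Dic (i + kZ, true) else Dic (- i, false).

Lemma kZ2 : kZ + kZ = 0.
Proof.
rewrite /kZ -natrD addnn; case: k => [|k'] //=.
by rewrite pchar_Zp.
Qed.

Lemma kZN : - kZ = kZ.
Proof. by apply/eqP; rewrite eq_sym -addr_eq0 kZ2. Qed.

Lemma dmulA : associative dmul.
Proof.
move=> [[i e]] [[j f]] [[l g]] /=; congr Dic; congr pair; last by rewrite addbA.
by case: e; case: f; case: g; rewrite /sgnZ /=; first [ring | rewrite -{1}kZN; ring].
Qed.

Lemma dmul1 : left_id done dmul.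
Proof. by move=> [[i e]] /=; congr Dic; rewrite /sgnZ /= add0r addr0. Qed.

Lemma dmulV : left_inverse done dinv dmul.
Proof.
move=> [[i e]]; case: e => /=; congr Dic; rewrite /sgnZ /=; congr pair.
  by rewrite -kZ2; ring.
by ring.
Qed.

End Dic.

HB.instance Definition _ k := Finite_isGroup.Build (dic k) (@dmulA k) (@dmul1 k) (@dmulV k).

Section DicGen.
Variable k : nat.
Import GRing.Theory.
Local Open Scope group_scope.

Definition DX : dic k := Dic (1%R, false).
Definition DY : dic k := Dic (0%R, true).

Lemma dmulE (x y : dic k) : x * y = dmul x y. Proof. by []. Qed.
Lemma dinvE (x : dic k) : x^-1 = dinv x. Proof. by []. Qed.

Lemma DXn j : DX ^+ j = Dic ((j%:R)%R, false).
Proof.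
elim: j => [|j IH]; first by [].
rewrite expgS IH dmulE /= /sgnZ /=; congr Dic; congr pair.
by rewrite GRing.mulrS GRing.addr0.
Qed.

Lemma DY2 : DY ^+ 2 = DX ^+ k.
Proof. rewrite DXn expgS expg1 dmulE /= /sgnZ /=. congr Dic; congr pair. by rewrite GRing.subrr GRing.add0r. Qed.

Lemma DXY : DX ^ DY^-1 = DX^-1.
Proof.
rewrite conjgE invgK; change (dmul DY (dmul DX (dinv DY)) = dinv DX).
rewrite /= /sgnZ /=; congr Dic; congr pair.
rewrite -kZN; ring.
Qed.

Lemma DXY_gen : <[DX]> <*> <[DY]> = [set: dic k].
Proof.
apply/eqP; rewrite eqEsubset subsetT /=; apply/subsetP => -[[i e]] _.
have ->: Dic (i, e) = DX ^+ (i : nat) * DY ^+ e.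
  rewrite DXn; case: e; rewrite ?expg1 ?expg0 ?mulg1.
    change (Dic (i,true) = dmul (Dic (((i : nat)%:R)%R, false)) DY).
    by rewrite /= /sgnZ /= !GRing.addr0 natr_Zp.
  by rewrite natr_Zp.
apply: groupM; [apply: (subsetP (joing_subl _ _)) | apply: (subsetP (joing_subr _ _))];
  exact: mem_cycle.
Qed.

End DicGen.

Local Open Scope group_scope.
Lemma Qcard_lb (gT : finGroupType) (G : {group gT}) k : 0 < k ->
  G \isog Grp (x : y : (x ^+ k = y ^+ 2, x ^ y^-1 = x^-1)) -> k * 4 <= #|G|.
Proof.
move=> k0 isoG.
have hp : [set: dic k]%G \homg Grp (x : y : (x ^+ k = y ^+ 2, x ^ y^-1 = x^-1)).
  apply/existsP; exists (DX k, DY k); rewrite /= !xpair_eqE /=.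
  by rewrite DXY_gen DY2 DXY !eqxx.
move: (isoG _ [set: dic k]%G); rewrite hp => /card_homg/dvdn_leq; rewrite cardG_gt0.
move=> /(_ isT) h; apply: leq_trans h; rewrite /= cardsT.
have injD : injective (@Dic k) by move=> x y [].
apply: leq_trans (leq_card _ injD); rewrite card_prod card_bool card_ord Zp_cast; last first.
  rewrite -addnn; exact: (leq_add k0 k0).
by rewrite -muln2 -mulnA.
Qed.

Local Open Scope group_scope.

Lemma memJl (gT : finGroupType) (A B : {set gT}) x : x \in A -> x \in A <*> B.
Proof. exact: (subsetP (joing_subl A B)). Qed.
Lemma memJr (gT : finGroupType) (A B : {set gT}) x : x \in B -> x \in A <*> B.
Proof. exact: (subsetP (joing_subr A B)). Qed.

Section Q.
Variables (gT : finGroupType) (X Y : gT) (k : nat).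
Hypotheses (hk : X ^+ k = Y ^+ 2) (hc : X ^ Y^-1 = X^-1).

Lemma QJV j : (X ^+ j) ^ Y^-1 = (X ^+ j)^-1.
Proof. by rewrite conjXg hc expgVn. Qed.

Lemma QJ1 : X ^ Y = X^-1.
Proof.
have E : X = (X ^ Y)^-1 by rewrite -{1}(conjgKV Y X) hc conjVg.
by rewrite {2}E invgK.
Qed.

Lemma QJ j : (X ^+ j) ^ Y = (X ^+ j)^-1.
Proof. by rewrite conjXg QJ1 expgVn. Qed.

Lemma QcJV c : c \in <[X]> -> c ^ Y^-1 = c^-1.
Proof. by case/cycleP=> j ->; apply: QJV. Qed.

Lemma QcJ c : c \in <[X]> -> c ^ Y = c^-1.
Proof. by case/cycleP=> j ->; apply: QJ. Qed.

Lemma QX2k : X ^+ (k * 2) = 1.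
Proof.
have E : (X ^+ k)^-1 = X ^+ k.
  by rewrite -QJV {1}hk conjXg conjgE invgK mulgV mulg1 hk.
by rewrite expgM expg2 -{1}E mulVg.
Qed.

Lemma QY4 : Y ^+ 4 = 1.
Proof. by rewrite (expgM Y 2 2) -hk -expgM QX2k. Qed.

Lemma QXjY j : X ^+ j * Y = Y * (X ^+ j)^-1.
Proof. by rewrite -(QJ j) conjgE mulKVg. Qed.

Lemma QYhalf j : (j * 2)%N = k -> Y ^ (X ^+ j)^-1 = Y^-1.
Proof.
move=> hj; rewrite conjgE invgK mulgA QXjY -mulgA -invMg -expgD addnn -muln2 hj hk.
by rewrite expg2 invMg mulKVg.
Qed.

Lemma Qnorm : <[Y]> \subset 'N(<[X]>).
Proof. by rewrite cycle_subG inE -cycleJ QJ1 cycleV. Qed.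

Lemma Qstruct g : g \in <[X]> <*> <[Y]> ->
  g \in <[X]> \/ exists2 c, c \in <[X]> & g = c * Y.
Proof.
rewrite norm_joinEr ?Qnorm // => /mulsgP[c y' Xc /cycleP[j ->] ->].
rewrite (divn_eq j 2) expgD mulnC expgM -hk modn2.
case: (odd j); [right | left]; last by rewrite expg0 mulg1 groupM // groupX // mem_cycle.
exists (c * (X ^+ k) ^+ (j %/ 2)); last by rewrite expg1 mulgA.
by rewrite groupM // groupX // mem_cycle.
Qed.

Lemma Qsq c : c \in <[X]> -> (c * Y) ^+ 2 = X ^+ k.
Proof.
move=> Xc; rewrite expg2 -{2}(conjgKV Y c) (QcJV Xc) conjgE !mulgA mulgK mulgV mul1g.
by rewrite hk expg2.
Qed.

Lemma Qinv c d : c \in <[X]> -> d \in <[X]> -> d ^ (c * Y) = d^-1.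
Proof.
move=> /cycleP[i ->] /cycleP[j ->]; rewrite conjgM.
have -> : (X ^+ j) ^ (X ^+ i) = X ^+ j.
  by rewrite conjgE -(commuteX2 i j (commute_refl X)) mulKg.
by rewrite QJ.
Qed.

Lemma Qcard : #|<[X]> <*> <[Y]>| <= 2 * #[X].
Proof.
apply: (leq_trans (subset_leq_card (_ : _ \subset <[X]> :|: <[X]> :* Y))).
  apply/subsetP=> g /Qstruct[Xg|[c Xc ->]]; rewrite inE ?Xg //.
  by rewrite mem_rcoset mulgK Xc orbT.
by rewrite mul2n -addnn (leq_trans (leq_card_setU _ _)) // card_rcoset.
Qed.

End Q.

Lemma cyc_conj (gT : finGroupType) (X c d : gT) :
  c \in <[X]> -> d \in <[X]> -> d ^ c = d.
Proof.
move=> /cycleP[i ->] /cycleP[j ->].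
by rewrite conjgE -(commuteX2 i j (commute_refl X)) mulKg.
Qed.

Lemma conj_cent (gT : finGroupType) (u g : gT) : u ^ g = u -> g \in 'C[u].
Proof. by move=> E; rewrite cent1C cent1E conjgC E. Qed.

Lemma gen_coprime (gT : finGroupType) (K : {group gT}) g p q :
  coprime p q -> g ^+ p \in K -> g ^+ q \in K -> g \in K.
Proof.
case: p => [|p] cpq gp gq.
  by move: cpq gq; rewrite /coprime gcd0n => /eqP ->; rewrite expg1.
have [kp kq E _] := egcdnP q (ltn0Sn p).
have -> : g = (g ^+ (kq * q))^-1 * g ^+ (kp * p.+1).
  by rewrite E (eqP cpq) addn1 expgSr mulKg.
by rewrite groupM ?groupV // mulnC expgM groupX.
Qed.

Lemma expg_mod_eq (gT : finGroupType) (u : gT) m a c :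
  u ^+ m = 1 -> (a = c %[mod m])%N -> u ^+ a = u ^+ c.
Proof. by move=> um e; rewrite -(expg_mod a um) e expg_mod. Qed.

Lemma expgV_of (gT : finGroupType) (u : gT) a : u ^+ a.+1 = 1 -> u ^+ a = u^-1.
Proof. by rewrite expgSr => h; rewrite -[u ^+ a]mulg1 -(mulgV u) mulgA h mul1g. Qed.

Lemma ord_eq1 (gT : finGroupType) (u : gT) a m :
  #[u] = m -> (u ^+ a = u <-> (a = 1 %[mod m])%N).
Proof.
move=> <-; split=> [h | h]; first by apply/eqP; rewrite -eq_expg_mod_order h expg1.
by rewrite -{2}(expg1 u); apply/eqP; rewrite eq_expg_mod_order; apply/eqP.
Qed.

Lemma ord_eqV (gT : finGroupType) (u : gT) a m :
  #[u] = m -> (u ^+ a = u^-1 <-> (a.+1 = 0 %[mod m])%N).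
Proof.
move=> <-; split=> [h | h].
  by apply/eqP; rewrite -eq_expg_mod_order expgSr h mulVg expg0.
apply: expgV_of; rewrite -(expg0 u); apply/eqP; rewrite eq_expg_mod_order; exact/eqP.
Qed.

Lemma odd_dvd (m d : nat) : 1 < m -> odd m -> (d == 2) || (d == 4) -> m %| d -> False.
Proof.
move=> m1 om /orP[] /eqP -> dv; have := dvdn_leq (ltn0Sn _) dv; move: m1 om dv;
  by case: m => [|[|[|[|[|m]]]]].
Qed.

Lemma mod4 m : odd m -> (2 * m = 2 %[mod 4])%N.
Proof. move=> om; have := odd_double_half m; rewrite om => E. lia. Qed.

Lemma backG (gT : finGroupType) (G : {group gT}) (X Y : gT) (N m a b : nat) :
  coprime (N * 2) m ->
  <[X]> <*> <[Y]> = G -> X ^+ (N * m) = Y ^+ 2 -> X ^ Y^-1 = X^-1 ->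
  ((a = 1 %[mod m])%N /\ (b.+1 = 0 %[mod m])%N) \/
  [/\ N = 2, (a.+1 = 0 %[mod m])%N & (b = 1 %[mod m])%N \/ (b.+1 = 0 %[mod m])%N] ->
  G \homg Grp (u : x : y : (u ^+ m = 1, x ^+ N = y ^+ 2,
                          x ^ y^-1 = x^-1, u ^ x^-1 = u ^+ a,
                          u ^ y^-1 = u ^+ b)).
Proof.
move=> cop defG hk hc [[ha hb] | [N2 ha hb]].
  apply/existsP; exists (X ^+ (N * 2), X ^+ m, Y); rewrite /= !xpair_eqE /=.
  have um : (X ^+ (N * 2)) ^+ m = 1.
    by rewrite -expgM mulnAC (QX2k hk hc).
  have Xu : X ^+ (N * 2) \in <[X]> by apply: mem_cycle.
  apply/and3P; split; [|apply/eqP => // |apply/and4P; split; apply/eqP].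
  - rewrite eqEsubset -defG; apply/andP; split.
      have XG : X \in <[X]> <*> <[Y]> by apply: memJl; exact: cycle_id.
      have YG : Y \in <[X]> <*> <[Y]> by apply: memJr; exact: cycle_id.
      by rewrite !join_subG !cycle_subG !groupX.
    rewrite join_subG !cycle_subG; apply/andP; split; last first.
      by apply: memJr; exact: cycle_id.
    apply: (@gen_coprime _ (<[X ^+ (N * 2)]> <*> <[X ^+ m]> <*> <[Y]>)%G _ _ _ cop).
      by apply: memJl; apply: memJl; exact: cycle_id.
    by apply: memJl; apply: memJr; exact: cycle_id.
  - by rewrite -expgM mulnC hk.
  - exact: QJV.
  - rewrite (cyc_conj _ Xu) ?groupV ?mem_cycle //.
    by rewrite (expg_mod_eq um ha) expg1.
  - rewrite (QJV hc) (expgV_of (u := X ^+ (N * 2)) (a := b)) //.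
    by rewrite (expg_mod_eq um hb) expg0.
subst N.
have Xu : X ^+ 4 \in <[X]> by apply: mem_cycle.
have um : (X ^+ 4) ^+ m = 1.
  by rewrite -expgM (_ : 4 * m = 2 * m * 2)%N ?(QX2k hk hc) //; lia.
have ua : (X ^+ 4) ^+ a = (X ^+ 4)^-1.
  by apply: expgV_of; rewrite (expg_mod_eq um ha) expg0.
have cop' : coprime 4 m by [].
have Xm : X ^+ m \in <[X]> by apply: mem_cycle.
case: hb => hb.
  apply/existsP; exists (X ^+ 4, Y, X ^+ m); rewrite /= !xpair_eqE /=.
  apply/and3P; split; [|apply/eqP => // |apply/and4P; split; apply/eqP].
  - rewrite eqEsubset -defG; apply/andP; split.
      have XG : X \in <[X]> <*> <[Y]> by apply: memJl; exact: cycle_id.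
      have YG : Y \in <[X]> <*> <[Y]> by apply: memJr; exact: cycle_id.
      rewrite !join_subG !cycle_subG -andbA; apply/and3P.
      by split; [apply: groupX; exact: XG | exact: YG | apply: groupX; exact: XG].
    rewrite join_subG !cycle_subG; apply/andP; split; last first.
      by apply: memJl; apply: memJr; exact: cycle_id.
    apply: (@gen_coprime _ (<[X ^+ 4]> <*> <[Y]> <*> <[X ^+ m]>)%G _ _ _ cop').
      by apply: memJl; apply: memJl; exact: cycle_id.
    by apply: memJr; exact: cycle_id.
  - by rewrite -expgM -hk mulnC.
  - by apply: (QYhalf hk hc); rewrite mulnC.
  - by rewrite (QJV hc) ua.
  - rewrite (cyc_conj _ Xu) ?groupV //.
    by rewrite (expg_mod_eq um hb) expg1.
apply/existsP; exists (X ^+ 4, Y, X ^+ m * Y); rewrite /= !xpair_eqE /=.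
apply/and3P; split; [|apply/eqP => // |apply/and4P; split; apply/eqP].
- rewrite eqEsubset -defG; apply/andP; split.
    have XG : X \in <[X]> <*> <[Y]> by apply: memJl; exact: cycle_id.
    have YG : Y \in <[X]> <*> <[Y]> by apply: memJr; exact: cycle_id.
    rewrite !join_subG !cycle_subG -andbA; apply/and3P.
    by split; [apply: groupX; exact: XG | exact: YG | apply: groupM; [apply: groupX; exact: XG | exact: YG]].
  have YK : Y \in <[X ^+ 4]> <*> <[Y]> <*> <[X ^+ m * Y]>.
    by apply: memJl; apply: memJr; exact: cycle_id.
  rewrite join_subG !cycle_subG YK andbT.
  apply: (@gen_coprime _ (<[X ^+ 4]> <*> <[Y]> <*> <[X ^+ m * Y]>)%G _ _ _ cop').
    by apply: memJl; apply: memJl; exact: cycle_id.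
  have : (X ^+ m * Y) * Y^-1 \in (<[X ^+ 4]> <*> <[Y]> <*> <[X ^+ m * Y]>)%G.
    by rewrite groupM ?groupV //; apply: memJr; exact: cycle_id.
  by rewrite mulgK.
- by rewrite (Qsq hk hc Xm).
- rewrite invMg conjgM.
  have -> : Y ^ Y^-1 = Y by rewrite conjgE invgK mulgV mulg1.
  by apply: (QYhalf hk hc); rewrite mulnC.
- by rewrite (QJV hc) ua.
- have ub : (X ^+ 4) ^+ b = (X ^+ 4)^-1.
    by apply: expgV_of; rewrite (expg_mod_eq um hb) expg0.
  rewrite invMg conjgM (QJV hc) (cyc_conj _ (groupVr Xu)) ?ub //.
  by rewrite groupV.
Qed.

Lemma backH (hT : finGroupType) (H : {group hT}) (u x y : hT) (N m a b : nat) :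
  odd m -> coprime (N * 2) m ->
  <[u]> <*> <[x]> <*> <[y]> = H -> u ^+ m = 1 -> x ^+ N = y ^+ 2 -> x ^ y^-1 = x^-1 ->
  u ^ x^-1 = u ^+ a -> u ^ y^-1 = u ^+ b ->
  ((a = 1 %[mod m])%N /\ (b.+1 = 0 %[mod m])%N) \/
  [/\ N = 2, (a.+1 = 0 %[mod m])%N & (b = 1 %[mod m])%N \/ (b.+1 = 0 %[mod m])%N] ->
  H \homg Grp (x : y : (x ^+ (N * m) = y ^+ 2, x ^ y^-1 = x^-1)).
Proof.
move=> om cop defH um hx hxy hua hub.
have Hu : u \in H by rewrite -defH; apply: memJl; apply: memJl; exact: cycle_id.
have Hx : x \in H by rewrite -defH; apply: memJl; apply: memJr; exact: cycle_id.
have Hy : y \in H by rewrite -defH; apply: memJr; exact: cycle_id.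
have um2 j : u ^+ (j * m) = 1 by rewrite mulnC expgM um expg1n.
have y2m : y ^+ (2 * m) = y ^+ 2 by apply: (expg_mod_eq (QY4 hx hxy)); apply: mod4.
move=> [[ha hb] | [N2 ha hb]].
  have ub : u ^+ b = u^-1 by apply: expgV_of; rewrite (expg_mod_eq um hb) expg0.
  have cxu : commute x u.
    apply/cent1P; rewrite -groupV; apply: conj_cent.
    by rewrite hua (expg_mod_eq um ha) expg1.
  apply/existsP; exists (x * u, y); rewrite /= !xpair_eqE /=.
  apply/and3P; split; apply/eqP.
  - apply/eqP; rewrite eqEsubset join_subG !cycle_subG groupM ?Hy //=.
    rewrite -{1}defH !join_subG !cycle_subG.
    have uK : u \in (<[x * u]> <*> <[y]>)%G.
      apply: (gen_coprime cop); last by rewrite um group1.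
      have <- : (x * u) ^+ (N * 2) = u ^+ (N * 2).
        by rewrite expgMn // (QX2k hx hxy) mul1g.
      by apply: groupX; apply: memJl; exact: cycle_id.
    have xK : x \in (<[x * u]> <*> <[y]>)%G.
      have : (x * u) * u^-1 \in (<[x * u]> <*> <[y]>)%G.
        by rewrite groupM ?groupV //; apply: memJl; exact: cycle_id.
      by rewrite mulgK.
    rewrite uK xK /=; apply: memJr; exact: cycle_id.
  - by rewrite expgMn // um2 mulg1 expgM hx -expgM.
  - by rewrite conjMg hxy hub ub cxu invMg.
subst N.
have ua : u ^+ a = u^-1 by apply: expgV_of; rewrite (expg_mod_eq um ha) expg0.
have cop' : coprime 4 m by [].
have yx : y ^ x^-1 = y^-1 by have := QYhalf hx hxy (j := 1) erefl; rewrite expg1.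
case: hb => hb.
  have cyu : commute y u.
    apply/cent1P; rewrite -groupV; apply: conj_cent.
    by rewrite hub (expg_mod_eq um hb) expg1.
  apply/existsP; exists (y * u, x); rewrite /= !xpair_eqE /=.
  apply/and3P; split; apply/eqP.
  - apply/eqP; rewrite eqEsubset join_subG !cycle_subG groupM ?Hx //=.
    rewrite -{1}defH !join_subG !cycle_subG.
    have uK : u \in (<[y * u]> <*> <[x]>)%G.
      apply: (gen_coprime cop'); last by rewrite um group1.
      have <- : (y * u) ^+ 4 = u ^+ 4.
        by rewrite expgMn // (QY4 hx hxy) mul1g.
      by apply: groupX; apply: memJl; exact: cycle_id.
    have yK : y \in (<[y * u]> <*> <[x]>)%G.
      have : (y * u) * u^-1 \in (<[y * u]> <*> <[x]>)%G.
        by rewrite groupM ?groupV //; apply: memJl; exact: cycle_id.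
      by rewrite mulgK.
    rewrite uK yK andbT /=; apply: memJr; exact: cycle_id.
  - by rewrite expgMn // um2 mulg1 y2m hx.
  - by rewrite conjMg yx hua ua cyu invMg.
have cxyu : commute (x * y) u.
  apply/cent1P; rewrite -groupV; apply: conj_cent.
  by rewrite invMg conjgM hub (expgV_of (u := u) (a := b)) ?(expg_mod_eq um hb) ?expg0 // conjVg hua ua invgK.
have xy2 : (x * y) ^+ 2 = x ^+ 2 := Qsq hx hxy (cycle_id x).
have xy4 : (x * y) ^+ 4 = 1.
  by rewrite (expgM _ 2 2) xy2 -expgM (QX2k hx hxy).
apply/existsP; exists (x * y * u, x); rewrite /= !xpair_eqE /=.
apply/and3P; split; apply/eqP.
- apply/eqP; rewrite eqEsubset join_subG !cycle_subG !groupM ?Hx ?Hy //=.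
  rewrite -{1}defH !join_subG !cycle_subG.
  have uK : u \in (<[x * y * u]> <*> <[x]>)%G.
    apply: (gen_coprime cop'); last by rewrite um group1.
    have <- : (x * y * u) ^+ 4 = u ^+ 4.
      by rewrite expgMn // xy4 mul1g.
    by apply: groupX; apply: memJl; exact: cycle_id.
  have xK : x \in (<[x * y * u]> <*> <[x]>)%G by apply: memJr; exact: cycle_id.
  have xyK : x * y \in (<[x * y * u]> <*> <[x]>)%G.
    have : (x * y * u) * u^-1 \in (<[x * y * u]> <*> <[x]>)%G.
      by rewrite groupM ?groupV //; apply: memJl; exact: cycle_id.
    by rewrite mulgK.
  rewrite uK xK /=.
  have : x^-1 * (x * y) \in (<[x * y * u]> <*> <[x]>)%G by rewrite groupM ?groupV.
  by rewrite mulKg.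
- rewrite expgMn // um2 mulg1.
  by rewrite (expg_mod_eq xy4 (mod4 om)) xy2.
- have e : y^-1 * x^-1 = x * y^-1 by rewrite -hxy conjgE invgK mulKg.
  rewrite !conjMg yx hua ua.
  have -> : x ^ x^-1 = x by rewrite conjgE invgK mulgV mulg1.
  by rewrite cxyu !invMg e.
Qed.

Lemma forward (hT : finGroupType) (H : {group hT}) (X Y u x y : hT) (N m a b : nat) :
  1 < m -> odd m -> 1 < N ->
  <[X]> <*> <[Y]> = H -> X ^+ (N * m) = Y ^+ 2 -> X ^ Y^-1 = X^-1 ->
  <[u]> <*> <[x]> <*> <[y]> = H -> u ^+ m = 1 -> x ^+ N = y ^+ 2 -> x ^ y^-1 = x^-1 ->
  u ^ x^-1 = u ^+ a -> u ^ y^-1 = u ^+ b ->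
  (N * m * 4 <= #|H|)%N ->
  [/\ (a = 1 %[mod m])%N \/ (a.+1 = 0 %[mod m])%N,
      (b = 1 %[mod m])%N \/ (b.+1 = 0 %[mod m])%N,
      ~ ((a = 1 %[mod m])%N /\ (b = 1 %[mod m])%N) &
      (4 <= N -> (a = 1 %[mod m])%N)].
Proof.
move=> m1 om N1 defH hk hc defH' um hx hxy hua hub cardH.
have Hu : u \in H by rewrite -defH'; apply: memJl; apply: memJl; exact: cycle_id.
have Hx : x \in H by rewrite -defH'; apply: memJl; apply: memJr; exact: cycle_id.
have Hy : y \in H by rewrite -defH'; apply: memJr; exact: cycle_id.
have nuQ : (<[x]> <*> <[y]>)%G \subset 'N(<[u]>).
  rewrite join_subG !cycle_subG; apply/andP; split;
    by rewrite -groupV inE -cycleJ ?hua ?hub cycle_subG mem_cycle.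
have cH : (#|H| <= #[u] * #|<[x]> <*> <[y]>|)%N.
  have sub : H \subset <[u]> * (<[x]> <*> <[y]>).
    rewrite -(norm_joinEr nuQ) -defH' !join_subG !cycle_subG.
    rewrite -andbA; apply/and3P; split;
      [apply: memJl | apply: memJr; apply: memJl | apply: memJr; apply: memJr];
      exact: cycle_id.
  apply: leq_trans (subset_leq_card sub) _.
  by rewrite mul_cardG leq_pmulr // cardG_gt0.
have ox : (#[x] <= N * 2)%N.
  by apply: dvdn_leq; [lia | rewrite order_dvdn (QX2k hx hxy)].
have ou : (#[u] <= m)%N by apply: dvdn_leq; [lia | rewrite order_dvdn um].
have Qc := Qcard hx hxy.
have ordu : #[u] = m by nia.
have ox2 : (N * 2 <= #[x])%N by nia.
have Xu : u \in <[X]>.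
  have uH : u \in <[X]> <*> <[Y]> by rewrite defH.
  have [//|[c Xc uE]] := Qstruct hk hc uH.
  exfalso; apply: (@odd_dvd m 4) => //; rewrite -ordu order_dvdn.
  by rewrite (expgM u 2 2) uE (Qsq hk hc Xc) -expgM (QX2k hk hc).
have conj_u g : g \in H -> u ^ g = u \/ u ^ g = u^-1.
  rewrite -defH => /(Qstruct hk hc)[Xg|[c Xc ->]]; first by left; exact: (cyc_conj Xg Xu).
  by right; exact: (Qinv hc Xc Xu).
have ua : u ^+ a = u \/ u ^+ a = u^-1 by rewrite -hua; apply: conj_u; rewrite groupV.
have ub : u ^+ b = u \/ u ^+ b = u^-1 by rewrite -hub; apply: conj_u; rewrite groupV.
split.
- by case: ua => h; [left; apply/(ord_eq1 a ordu) | right; apply/(ord_eqV a ordu)].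
- by case: ub => h; [left; apply/(ord_eq1 b ordu) | right; apply/(ord_eqV b ordu)].
- move=> [/(ord_eq1 a ordu) ha /(ord_eq1 b ordu) hb].
  have sHC : H \subset 'C[u].
    rewrite -defH' !join_subG !cycle_subG cent1id /=.
    by rewrite -groupV conj_cent ?hua // -groupV conj_cent ?hub.
  have YH : Y^-1 \in H by rewrite groupV -defH; apply: memJr; exact: cycle_id.
  have E : u ^ Y^-1 = u.
    by have /cent1P c := subsetP sHC _ YH; rewrite conjgE -c mulKg.
  rewrite (QcJV hc Xu) in E.
  apply: (@odd_dvd m 2) => //; rewrite -ordu order_dvdn expg2 -{2}E mulgV.
  by [].
- move=> N4.
  have xH : x \in <[X]> <*> <[Y]> by rewrite defH.
  have [Xx|[c Xc xE]] := Qstruct hk hc xH.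
    by apply/(ord_eq1 a ordu); rewrite -hua (cyc_conj _ Xu) // groupV.
  have : (#[x] <= 4)%N.
    apply: dvdn_leq => //; rewrite order_dvdn (expgM x 2 2) xE (Qsq hk hc Xc).
    by rewrite -expgM (QX2k hk hc).
  lia.
Qed.

Theorem lemma1p8 (n m a b : nat)
  (gT hT : finGroupType) (G : {group gT}) (H : {group hT}) :
  3 <= n -> 1 <= m -> odd m ->
  (a ^ 2 = 1 %[mod m])%N -> (b ^ 2 = 1 %[mod m])%N ->
  G \isog Grp (x : y : (x ^+ (2 ^ (n - 2) * m) = y ^+ 2, x ^ y^-1 = x^-1)) ->
  H \isog Grp (u : x : y : (u ^+ m = 1, x ^+ (2 ^ (n - 2)) = y ^+ 2,
                          x ^ y^-1 = x^-1, u ^ x^-1 = u ^+ a,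
                          u ^ y^-1 = u ^+ b)) ->
  (G \isog H <->
   (if n == 3 then
      [\/ (a = 1 %[mod m])%N /\ (b.+1 = 0 %[mod m])%N,
          (a.+1 = 0 %[mod m])%N /\ (b = 1 %[mod m])%N |
          (a.+1 = 0 %[mod m])%N /\ (b.+1 = 0 %[mod m])%N]
    else (a = 1 %[mod m])%N /\ (b.+1 = 0 %[mod m])%N)).
Proof.
move=> n3 m1 om _ _ isoG isoH.
have N1 : (1 < 2 ^ (n - 2))%N by rewrite (ltn_exp2l 0) // subn_gt0.
have cop : coprime (2 ^ (n - 2) * 2) m by rewrite -expnSr coprimeXl // coprime2n.
have k0 : (0 < 2 ^ (n - 2) * m)%N by rewrite muln_gt0 expn_gt0 m1.
have cardG := Qcard_lb k0 isoG.
split.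
- move=> isoGH.
  have homHG : H \homg G by rewrite isog_hom // isog_sym.
  have := homGrp_trans homHG (isoGrp_hom isoG).
  case/existsP=> -[X Y] /=; rewrite !xpair_eqE /= => /and3P[/eqP defH /eqP hk /eqP hc].
  case/existsP: (isoGrp_hom isoH) => -[[u x] y] /=; rewrite !xpair_eqE /=.
  move=> /and3P[/eqP defH' /eqP um /and4P[/eqP hx /eqP hxy /eqP hua /eqP hub]].
  have [m_1 | m1'] : m = 1%N \/ (1 < m)%N by clear -m1; lia.
    by subst m; case: ifP => _; [constructor 1 |]; rewrite !modn1.
  have cH : (2 ^ (n - 2) * m * 4 <= #|H|)%N by rewrite -(card_isog isoGH).
  have [A B C D] := forward m1' om N1 defH hk hc defH' um hx hxy hua hub cH.
  case: eqP => [n3e | nn3] /=.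
    case: A => ha; case: B => hb; [exfalso; apply: C; split | apply: Or31; split | apply: Or32; split | apply: Or33; split]; assumption.
  have N4 : (4 <= 2 ^ (n - 2))%N.
    by rewrite (_ : 4 = 2 ^ 2)%N // leq_exp2l //; clear -n3 nn3; lia.
  have ha := D N4; split => //.
  by case: B => // hb; exfalso; exact: C.
- move=> cond.
  have cond' : ((a = 1 %[mod m])%N /\ (b.+1 = 0 %[mod m])%N) \/
    [/\ (2 ^ (n - 2) = 2)%N, (a.+1 = 0 %[mod m])%N &
        (b = 1 %[mod m])%N \/ (b.+1 = 0 %[mod m])%N].
    move: cond; case: eqP => [-> | _]; last by left.
    by case=> [h | [h1 h2] | [h1 h2]]; [left | right; split => //; left | right; split => //; right].
  rewrite isogEhom; apply/andP; split.
    rewrite isoH.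
    case/existsP: (isoGrp_hom isoG) => -[X Y] /=; rewrite !xpair_eqE /=.
    move=> /and3P[/eqP defG /eqP hk /eqP hc].
    exact: backG cop defG hk hc cond'.
  rewrite isoG.
  case/existsP: (isoGrp_hom isoH) => -[[u x] y] /=; rewrite !xpair_eqE /=.
  move=> /and3P[/eqP defH' /eqP um /and4P[/eqP hx /eqP hxy /eqP hua /eqP hub]].
  exact: backH om cop defH' um hx hxy hua hub cond'.
Qed.
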